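(* Let $K$ be a Cantor set with metric $d$. For every homeomorphism $T:K\to K$ and every $\varepsilon>0$ there exists a homeomorphism $\widetilde T:K\to K$ such that $D(T,\widetilde T)=\max_{x\in K} d(T(x),\widetilde T(x))<\varepsilon$ and, for every $x\in K$, the $\omega$-limit set of $x$ under $\widetilde T$ is a periodic orbit of $\widetilde T$.
   Context: A Cantor set is a nonempty totally disconnected, perfect, compact metric space. *)

(* Defs.v *)
From HB Require Import structures.
From mathcomp Require Import all_boot all_order all_algebra.
From mathcomp Require Import all_classical all_reals all_analysis.
Set Implicit Arguments. Unset Strict Implicit. Unset Printing Implicit Defensive.
Import Order.TTheory GRing.Theory Num.Theory.
Local Open Scope classical_set_scope.
Local Open Scope ring_scope.

Definition cantor_set (R : realType) (K : metricType R) : Prop :=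
  [/\ [set: K] !=set0, totally_disconnected [set: K],
      perfect_set [set: K] & compact [set: K]].

Definition homeomorphism (K : topologicalType) (f : K -> K) : Prop :=
  exists g : K -> K, [/\ cancel f g, cancel g f, continuous f & continuous g].

Definition omega_limit (K : topologicalType) (f : K -> K) (x : K) : set K :=
  [set y | forall U, nbhs y U -> forall N : nat,
           exists n : nat, (N <= n)%N /\ U (iter n f x)].

Definition periodic_orbit (K : Type) (f : K -> K) (O : set K) : Prop :=
  exists (p : K) (k : nat), [/\ (0 < k)%N, iter k f p = p &
                                O = range (fun n : nat => iter n f p)].

(* Main.v *)
Require Import Defs.
From HB Require Import structures.
From mathcomp Require Import all_boot all_order all_algebra.
From mathcomp Require Import all_classical all_reals all_analysis.
From mathcomp Require Import zify.
From mathcomp Require Import lra.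
Set Implicit Arguments. Unset Strict Implicit. Unset Printing Implicit Defensive.
Import Order.TTheory GRing.Theory Num.Theory.
Import numFieldNormedType.Exports.
Local Open Scope classical_set_scope.


Definition agree (n : nat) (x y : cantor_space) := forall i, (i < n)%N -> x i = y i.

Lemma cvg_coordP (F : set_system cantor_space) (z : cantor_space) :
  Filter F -> (forall i, \forall y \near F, y i = z i) -> F --> z.
Proof.
move=> FF Fz; apply/cvg_sup => i U [V] [[W] oW <-] WzI WU.
apply: (filterS WU); rewrite nbhs_simpl; apply: filterS (Fz i) => y /= ->.
exact: WzI.
Qed.

Lemma nbhs_coord (x : cantor_space) (i : nat) : nbhs x [set y : cantor_space | y i = x i].
Proof.
have := @proj_continuous nat (fun _ => bool) i x.
move=> /(_ [set x i]) H; apply: H.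
exact: discrete_set1.
Qed.

Lemma nbhs_cyl (x : cantor_space) n : nbhs x [set y | agree n x y].
Proof.
elim: n => [|n IH]; first by apply: filterS filterT => y _ i.
apply: filterS (filterI IH (nbhs_coord x n)) => y [Hy Hn] i.
rewrite ltnS leq_eqVlt => /orP[/eqP -> //|/Hy //].
Qed.

Lemma nbhsP (z : cantor_space) (A : set cantor_space) :
  nbhs z A -> exists n, forall y, agree n z y -> A y.
Proof.
move=> zA; apply: contrapT => /forallNP H.
have H' : forall n, exists y, agree n z y /\ ~ A y.
  move=> n; have /existsNP [y /not_implyP [H1 H2]] := H n; by exists y.
pose y n := projT1 (cid (H' n)).
have yP n : agree n z (y n) /\ ~ A (y n) := projT2 (cid (H' n)).
have : y @ \oo --> z.
  apply: cvg_coordP => i; exists i.+1 => // n /= lein.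
  by case: (yP n) => + _ => /(_ i lein) ->.
move=> /(_ A zA) [N _ HN].
by have [_ /(_ (HN N (leqnn N)))] := yP N.
Qed.

Lemma cont_crit (f : cantor_space -> cantor_space) :
  (forall x i, exists n, forall y, agree n x y -> f y i = f x i) -> continuous f.
Proof.
move=> H x; apply: cvg_coordP => i.
have [n Hn] := H x i.
by apply: filterS (nbhs_cyl x n) => y /Hn.
Qed.

Lemma cvg_coord (F : set_system cantor_space) (z : cantor_space) :
  Filter F -> F --> z -> forall i, \forall y \near F, y i = z i.
Proof. by move=> FF Fz i; apply: Fz; exact: nbhs_coord. Qed.

Lemma agree_trans n x y z : agree n x y -> agree n y z -> agree n x z.
Proof. by move=> H1 H2 i lt; rewrite H1 // H2. Qed.
Lemma agree_sym n x y : agree n x y -> agree n y x.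
Proof. by move=> H i lt; rewrite H. Qed.
Lemma agree_le m n x y : (m <= n)%N -> agree n x y -> agree m x y.
Proof. by move=> mn H i lt; apply: H; exact: leq_trans lt mn. Qed.

Lemma cyl_open (x : cantor_space) n : open [set y | agree n x y].
Proof.
rewrite openE => y Cy; rewrite /interior.
by apply: filterS (nbhs_cyl y n) => w; apply: agree_trans.
Qed.

Lemma unif (Q : cantor_space -> cantor_space -> Prop) :
  (forall x, exists n, forall y z, agree n x y -> agree n x z -> Q y z) ->
  exists L, forall y z, agree L y z -> Q y z.
Proof.
move=> H; pose n x := projT1 (cid (H x)).
have nP x : forall y z, agree (n x) x y -> agree (n x) x z -> Q y z := projT2 (cid (H x)).
have := cantor_space_compact; rewrite compact_cover => /(_ cantor_space setT
  (fun x => [set y | agree (n x) x y])).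
case.
- by move=> x _; exact: cyl_open.
- by move=> y _; exists y => //.
move=> D' _ cov; exists (\max_(x <- (finmap.enum_fset D')) n x) => y z yz.
have [x xD' /= xy] := cov y I.
apply: (nP x) => //; apply: agree_trans xy _.
apply: agree_le yz; exact: leq_bigmax_seq.
Qed.


Definition app (w : seq bool) (s : cantor_space) : cantor_space :=
  fun i => if (i < size w)%N then nth false w i else s (i - size w)%N.
Definition shift (k : nat) (s : cantor_space) : cantor_space := fun i => s (i + k)%N.
Definition lead (n : nat) (s : cantor_space) : nat := find (fun i => ~~ s i) (iota 0 n).

Lemma app_nil s : app [::] s = s.
Proof. by apply: functional_extensionality_dep => i; rewrite /app /= subn0. Qed.

Lemma app_cat w1 w2 s : app (w1 ++ w2) s = app w1 (app w2 s).
Proof.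
apply: functional_extensionality_dep => i; rewrite /app size_cat nth_cat.
case: (ltnP i (size w1)) => h1; first by rewrite (ltn_addr _ h1).
by rewrite ltn_subLR // -subnDA.
Qed.

Lemma shift_app w s : shift (size w) (app w s) = s.
Proof.
apply: functional_extensionality_dep => i.
by rewrite /shift /app ltnNge leq_addl /= addnK.
Qed.

Lemma shift_shift a b s : shift a (shift b s) = shift (a + b) s.
Proof. by apply: functional_extensionality_dep => i; rewrite /shift addnA. Qed.

Lemma app_shift_eq w x : (forall i, (i < size w)%N -> x i = nth false w i) ->
  app w (shift (size w) x) = x.
Proof.
move=> H; apply: functional_extensionality_dep => i; rewrite /app /shift.
by case: ltnP => h; [rewrite H | rewrite subnK].
Qed.

Lemma app_nth w s i : (i < size w)%N -> app w s i = nth false w i.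
Proof. by rewrite /app => ->. Qed.

Lemma lead_le n s : (lead n s <= n)%N.
Proof. by rewrite /lead; have := find_size (fun i => ~~ s i) (iota 0 n); rewrite size_iota. Qed.

Lemma lead_lt n s : (lead n s < n)%N -> s (lead n s) = false.
Proof.
rewrite /lead => h; have := h; rewrite -[X in (_ < X)%N](size_iota 0 n) -has_find => /(nth_find 0).
by rewrite nth_iota // add0n; case: (s _).
Qed.

Lemma lead_before n s i : (i < lead n s)%N -> s i = true.
Proof.
move=> h; have hn : (i < n)%N by apply: leq_trans h (lead_le _ _).
have := before_find 0 h; rewrite nth_iota // add0n; by case: (s i).
Qed.

Lemma lead_eq n s j : (j <= n)%N -> (forall i, (i < j)%N -> s i = true) ->
  ((j < n)%N -> s j = false) -> lead n s = j.
Proof.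
move=> jn Hb Hj; apply/eqP; rewrite eqn_leq; apply/andP; split.
  case: ltngtP jn => // [jn _ | -> _]; last exact: lead_le.
  by rewrite leqNgt; apply/negP => /lead_before; rewrite Hj.
rewrite leqNgt; apply/negP => h.
have := lead_lt (leq_trans h jn); by rewrite Hb.
Qed.

Section Phi.
Variable L : nat.
Local Notation Cell := (L.-tuple bool).

Definition cellof (x : cantor_space) : Cell := [tuple x i | i < L].

Lemma cellof_nth x i : (i < L)%N -> nth false (cellof x) i = x i.
Proof. by move=> h; rewrite -(tnth_nth false (cellof x) (Ordinal h)) tnth_mktuple. Qed.

Lemma app_cellof x : app (cellof x) (shift L x) = x.
Proof.
rewrite -{2}(size_tuple (cellof x)); apply: app_shift_eq => i.
by rewrite size_tuple => h; rewrite cellof_nth.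
Qed.

Lemma cellof_app (w : Cell) s : cellof (app w s) = w.
Proof.
apply: eq_from_tnth => i; rewrite tnth_mktuple app_nth ?size_tuple //.
by rewrite (tnth_nth false).
Qed.

Lemma shiftL_app (w : Cell) s : shift L (app w s) = s.
Proof. by rewrite -{1}(size_tuple w) shift_app. Qed.

Variables (G : finType) (X : Cell -> bool) (key : Cell -> G) (P Q : G -> seq Cell)
  (c : G -> Cell).

Definition Phi (x : cantor_space) : cantor_space :=
  let w := cellof x in let s := shift L x in
  if ~~ X w then app (c (key w) ++ nseq (index w (P (key w))) true ++ [:: false]) s
  else let u := key w in let n := size (Q u) in let j := lead n s in
   if (j < n)%N then app (nth w (Q u) j) (shift j.+1 s)
   else app (c u ++ nseq (size (P u)) true) (shift n s).

End Phi.

Section PhiInv.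
Variable L : nat.
Local Notation Cell := (L.-tuple bool).
Variables (G : finType) (X1 X2 : Cell -> bool) (key1 key2 : Cell -> G)
  (P Q : G -> seq Cell) (c d : G -> Cell).
Hypotheses (HP : forall u w, (w \in P u) = (~~ X1 w && (key1 w == u)))
  (uP : forall u, uniq (P u))
  (HQ : forall u v, (v \in Q u) = (~~ X2 v && (key2 v == u)))
  (uQ : forall u, uniq (Q u))
  (Hc : forall u, X2 (c u) /\ key2 (c u) = u)
  (Hd : forall u, X1 (d u) /\ key1 (d u) = u)
  (HX1 : forall w, X1 w -> w = d (key1 w)).

Lemma app_code j s : app (nseq j true ++ [:: false]) s =
  fun i => if (i < j)%N then true else if i == j then false else s (i - j.+1)%N.
Proof.
apply: functional_extensionality_dep => i; rewrite /app size_cat size_nseq /= addn1.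
rewrite nth_cat size_nseq nth_nseq; case: (ltngtP i j) => h.
- by rewrite (ltn_trans h (ltnSn j)).
- by rewrite ltnNge h /=.
- by rewrite h ltnSn subnn.
Qed.

Lemma Phi_inv : cancel (Phi X1 key1 P Q c) (Phi X2 key2 Q P d).
Proof.
move=> x; have xe := app_cellof L x; rewrite /Phi.
set w := cellof L x in xe *; set s := shift L x in xe *.
case Xw: (X1 w) => /=.
- set u := key1 w; set n := size (Q u); set j := lead n s.
  have wd : w = d u by apply: HX1.
  case: ltnP => jn.
  + set v := nth w (Q u) j.
    have vQ : v \in Q u by apply: mem_nth.
    move: (vQ); rewrite HQ => /andP [nXv /eqP kv].
    rewrite cellof_app nXv shiftL_app kv /= (index_uniq _ jn (uQ u)) -/v.
    rewrite -[RHS]xe wd app_cat; congr (app _ _); rewrite app_code.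
    apply: functional_extensionality_dep => i; rewrite /shift.
    case: ltngtP => h.
    * by rewrite (@lead_before n s i h).
    * by rewrite subnK.
    * by rewrite h (@lead_lt n s jn).
  + have jn' : j = n by apply/eqP; rewrite eqn_leq lead_le jn.
    have [Xc kc] := Hc u.
    rewrite app_cat cellof_app Xc /= kc shiftL_app.
    set m := size (P u).
    have -> : lead m (app (nseq m true) (shift n s)) = m.
      apply: lead_eq => [//| i im |]; last by rewrite ltnn.
      by rewrite app_nth ?size_nseq // nth_nseq im.
    rewrite ltnn -/n -[RHS]xe wd app_cat; congr (app _ _).
    rewrite -{1}(size_nseq m true) shift_app.
    have := @app_shift_eq (nseq n true) s; rewrite size_nseq; apply => i h.
    by rewrite nth_nseq h (@lead_before n s i) // -/j jn'.
- set u := key1 w; set j := index w (P u).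
  have wP : w \in P u by rewrite HP Xw eqxx.
  have [Xc kc] := Hc u.
  rewrite app_cat cellof_app shiftL_app Xc /= kc.
  have jn : (j < size (P u))%N by rewrite index_mem.
  have -> : lead (size (P u)) (app (nseq j true ++ [:: false]) s) = j.
    apply: lead_eq; first exact: ltnW.
      by move=> i ij; rewrite app_code ij.
    by move=> _; rewrite app_code ltnn eqxx.
  rewrite jn nth_index // -[RHS]xe.
  rewrite [j.+1](_ : _ = size (nseq j true ++ [:: false])) ?shift_app //.
  by rewrite size_cat size_nseq addn1.
Qed.
End PhiInv.

Lemma agree_cellof L x y : agree L x y -> cellof L x = cellof L y.
Proof. by move=> H; apply: eq_from_tnth => i; rewrite !tnth_mktuple H. Qed.

Lemma agree_shift k n x y : agree (k + n) x y -> agree n (shift k x) (shift k y).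
Proof. by move=> H i lt; rewrite /shift H // addnC ltn_add2l. Qed.

Lemma agree_lead n s s' : agree n s s' -> lead n s = lead n s'.
Proof.
move=> H; rewrite /lead; apply: eq_in_find => i; rewrite mem_iota add0n => /andP[_ h].
by rewrite H.
Qed.

Section PhiCont.
Variable L : nat.
Local Notation Cell := (L.-tuple bool).
Variables (G : finType) (X : Cell -> bool) (key : Cell -> G) (P Q : G -> seq Cell)
  (c : G -> Cell).

Lemma Phi_local x : exists W k m, forall y, agree m x y ->
  Phi X key P Q c y = app W (shift k y).
Proof.
rewrite /Phi; set w := cellof L x.
case Xw: (X w) => /=.
- set u := key w; set n := size (Q u).
  exists (if (lead n (shift L x) < n)%N then val (nth w (Q u) (lead n (shift L x)))
          else c u ++ nseq (size (P u)) true).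
  exists (if (lead n (shift L x) < n)%N then (lead n (shift L x)).+1 + L else n + L).
  exists (L + n) => y Hy.
  have e : cellof L y = w by rewrite /w (agree_cellof (agree_le (leq_addr _ _) Hy)).
  have el : lead n (shift L y) = lead n (shift L x).
    by apply/esym/agree_lead/agree_shift.
  rewrite e Xw /= -/u -/n el; case: ifP => _; by rewrite shift_shift.
- exists (c (key w) ++ nseq (index w (P (key w))) true ++ [:: false]), L, L => y Hy.
  have e : cellof L y = w by rewrite /w (agree_cellof Hy).
  by rewrite e Xw.
Qed.

Lemma Phi_cont : continuous (Phi X key P Q c).
Proof.
apply: cont_crit => x i.
have [W [k [m H]]] := Phi_local x.
exists (m + (k + i).+1) => y Hy.
rewrite (H y (agree_le (leq_addr _ _) Hy)) (H x (fun _ _ => erefl)).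
rewrite /app /shift; case: ifP => // h.
rewrite Hy //; apply: (@leq_trans (k + i).+1); last exact: leq_addl.
by rewrite ltnS addnC leq_add2l leq_subr.
Qed.
End PhiCont.


Lemma iter_mul_fix (T : Type) (g : T -> T) d b : iter d g b = b ->
  forall m, iter (m * d) g b = b.
Proof. by move=> H; elim=> [//|m IH]; rewrite mulSn iterD IH H. Qed.

Lemma per_fix (G : finType) (g : G -> G) a :
  iter (#|G|)`! g (iter #|G| g a) = iter #|G| g a.
Proof.
set K := #|G|.
pose F (i : 'I_K.+1) := iter i g a.
have [i [j [Fij ij]]] : exists i j, F i = F j /\ (i < j)%N.
  case: (pselect (injective F)) => [Finj|nFinj].
    by have := leq_card F Finj; rewrite card_ord ltnn.
  move/existsNP: nFinj => [i /existsNP [j /not_implyP [Fij nij]]].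
  have : (i : nat) != j by apply/negP => /eqP /val_inj.
  rewrite neq_ltn => /orP [h|h]; [by exists i, j | by exists j, i].
have iK : (i <= K)%N by rewrite -ltnS.
have jK : (j <= K)%N by rewrite -ltnS.
have fix_d : iter (j - i) g (iter K g a) = iter K g a.
  rewrite -iterD.
  have -> : (j - i + K = (K - i) + j)%N.
    by rewrite addnC addnBA ?(ltnW ij) // addnBAC.
  have Fij' : iter j g a = iter i g a by [].
  by rewrite iterD Fij' -iterD subnK.
have d0 : (0 < j - i <= K)%N by rewrite subn_gt0 ij /= (leq_trans (leq_subr _ _) jK).
have /dvdnP [m ->] := dvdn_fact d0.
exact: iter_mul_fix.
Qed.

Lemma back_periodic (G : finType) (h : G -> G) (u : nat -> G) :
  (forall n, h (u n.+1) = u n) -> forall n, u (n + (#|G|)`!)%N = u n.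
Proof.
move=> Hu.
have Hit : forall k n, iter k h (u (n + k)%N) = u n.
  elim=> [n|k IH n]; first by rewrite addn0.
  by rewrite iterSr addnS Hu IH.
move=> n; set P := (#|G|)`!.
rewrite -(Hit P n) -(Hit #|G| (n + P)%N) per_fix.
by rewrite (Hit #|G| (n + P)%N).
Qed.

Section Construction.
Variables (N L : nat).
Local Notation G := (N.-tuple bool).
Local Notation Cell := (L.-tuple bool).
Variables (f p : Cell -> G) (alpha beta : G -> Cell).
Hypotheses (Hpa : forall u, p (alpha u) = u) (Hfb : forall u, f (beta u) = u)
  (Hab : forall u w, alpha u != beta w).

Definition isA (c : Cell) := c == alpha (p c).
Definition isB (c : Cell) := c == beta (f c).
Definition S u := [seq c <- enum {: Cell} | ~~ isB c && (f c == u)].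
Definition T u := [seq c <- enum {: Cell} | ~~ isA c && (p c == u)].
Definition sigma := Phi isB f S T alpha.
Definition tau := Phi isA p T S beta.

Lemma memS u w : (w \in S u) = (~~ isB w && (f w == u)).
Proof. by rewrite mem_filter mem_enum andbT. Qed.
Lemma memT u w : (w \in T u) = (~~ isA w && (p w == u)).
Proof. by rewrite mem_filter mem_enum andbT. Qed.
Lemma uniqS u : uniq (S u). Proof. by rewrite filter_uniq // enum_uniq. Qed.
Lemma uniqT u : uniq (T u). Proof. by rewrite filter_uniq // enum_uniq. Qed.

Lemma sigmaK : cancel sigma tau.
Proof.
apply: Phi_inv; try (by move=> w /eqP); try (by move=> u; rewrite /isA Hpa eqxx);
  try (by move=> u; rewrite /isB Hfb eqxx);
  first [exact: memS | exact: uniqS | exact: memT | exact: uniqT].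
Qed.

Lemma tauK : cancel tau sigma.
Proof.
apply: Phi_inv; try (by move=> w /eqP); try (by move=> u; rewrite /isA Hpa eqxx);
  try (by move=> u; rewrite /isB Hfb eqxx);
  first [exact: memS | exact: uniqS | exact: memT | exact: uniqT].
Qed.

Lemma sigma_cont : continuous sigma. Proof. exact: Phi_cont. Qed.
Lemma tau_cont : continuous tau. Proof. exact: Phi_cont. Qed.


Definition code (w : Cell) := nseq (index w (S (f w))) true ++ [:: false].
Definition g u := f (alpha u).
Fixpoint Wd u k := if k is k'.+1 then code (alpha (iter k' g u)) ++ Wd u k' else [::].

Lemma sigma_nonB (w : Cell) s : ~~ isB w ->
  sigma (app w s) = app (alpha (f w)) (app (code w) s).
Proof. by move=> nB; rewrite /sigma /Phi cellof_app shiftL_app nB /= app_cat. Qed.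

Lemma notB_alpha u : ~~ isB (alpha u).
Proof. by rewrite /isB Hab. Qed.

Lemma iterA k u s : iter k sigma (app (alpha u) s) = app (alpha (iter k g u)) (app (Wd u k) s).
Proof.
elim: k => [|k IH] /=; first by rewrite app_nil.
by rewrite IH sigma_nonB ?notB_alpha // app_cat.
Qed.

Lemma WdD u a b : Wd u (b + a) = Wd (iter a g u) b ++ Wd u a.
Proof. by elim: b => [//|b IH]; rewrite addSn /= IH catA -iterD. Qed.

Lemma size_Wd u k : (k <= size (Wd u k))%N.
Proof.
elim: k => [//|k IH] /=; rewrite size_cat /code size_cat /= addn1 addSn ltnS.
exact: leq_trans IH (leq_addl _ _).
Qed.

Definition Zr (Q : seq bool) : cantor_space := fun i => nth false Q (i %% size Q).

Lemma appZ Q : (0 < size Q)%N -> app Q (Zr Q) = Zr Q.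
Proof.
move=> Q0; apply: functional_extensionality_dep => i; rewrite /app /Zr.
case: ltnP => h; first by rewrite modn_small.
by rewrite -{2}(subnK h) modnDr.
Qed.

Lemma iter_cont (F : cantor_space -> cantor_space) : continuous F ->
  forall j, continuous (iter j F).
Proof.
move=> Fc; elim=> [|j IH] x /=; first exact: cvg_id.
exact: (continuous_comp (IH x) (Fc _)).
Qed.

Lemma dynA x n0 u s : iter n0 sigma x = app (alpha u) s ->
  exists z q n1, (0 < q)%N /\ iter q sigma z = z /\
  forall j, (fun k => iter (n1 + k * q + j)%N sigma x) @ \oo --> iter j sigma z.
Proof.
move=> hx; set K := #|{: G}|; set q := K`!.
set v := iter K g u.
have hv : iter q g v = v by exact: per_fix.
set Q := Wd v q.
have q0 : (0 < q)%N by exact: fact_gt0.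
have Q0 : (0 < size Q)%N by exact: leq_trans q0 (size_Wd _ _).
set s2 := app (Wd u K) s.
have hy2 : iter (K + n0) sigma x = app (alpha v) s2 by rewrite iterD hx iterA.
have hm : forall m, iter (m * q) sigma (app (alpha v) s2) =
    app (alpha v) (app (Wd v (m * q)) s2).
  by move=> m; rewrite iterA (iter_mul_fix hv).
have WZ : forall m, app (Wd v (m * q)) (Zr Q) = Zr Q.
  elim=> [|m IH]; first by rewrite mul0n app_nil.
  by rewrite mulSn WdD (iter_mul_fix hv) app_cat IH appZ.
set z := app (alpha v) (Zr Q).
have hz : iter q sigma z = z by rewrite /z iterA hv appZ.
exists z, q, (K + n0)%N; split => //; split => // j.
have -> : (fun k => iter (K + n0 + k * q + j) sigma x) =
    (iter j sigma) \o (fun k => iter (k * q) sigma (app (alpha v) s2)).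
  apply: funext => k /=; rewrite -hy2 -!iterD; congr iter.
  lia.
apply: continuous_cvg; first exact: iter_cont sigma_cont j z.
apply: cvg_coordP => i; exists i.+1 => // m /= im.
rewrite hm /z /app size_tuple; case: ltnP => // iL.
have hs : (i - L < size (Wd v (m * q)))%N.
  apply: leq_ltn_trans (leq_subr _ _) _; apply: leq_trans im _.
  apply: leq_trans (size_Wd _ _); by rewrite leq_pmulr.
by rewrite hs -(WZ m) app_nth.
Qed.


Lemma sigma_B u s : sigma (app (beta u) s) =
  let n := size (T u) in let j := lead n s in
  if (j < n)%N then app (nth (beta u) (T u) j) (shift j.+1 s)
  else app (alpha u ++ nseq (size (S u)) true) (shift n s).
Proof. by rewrite /sigma /Phi cellof_app shiftL_app /isB Hfb eqxx. Qed.

Definition code2 a b := nseq (index (beta b) (T a)) true ++ [:: false].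

Lemma dynB x : (forall n, isB (cellof L (iter n sigma x))) ->
  iter (#|{: G}|)`! sigma x = x.
Proof.
move=> HB; set q := (#|{: G}|)`!.
pose u n := f (cellof L (iter n sigma x)).
pose t n := shift L (iter n sigma x).
have xn n : iter n sigma x = app (beta (u n)) (t n).
  by rewrite /u /t -(eqP (HB n)) app_cellof.
have step n : p (beta (u n.+1)) = u n /\ t n = app (code2 (u n) (u n.+1)) (t n.+1).
  have e1 : iter n.+1 sigma x = sigma (app (beta (u n)) (t n)) by rewrite iterS xn.
  move: e1; rewrite sigma_B /=.
  set n' := size (T (u n)); set j := lead n' (t n).
  case: ltnP => jn e1; last first.
    exfalso; move: (HB n.+1); rewrite iterS e1 app_cat cellof_app; apply/negP.
    exact: notB_alpha.
  set v := nth (beta (u n)) (T (u n)) j in e1.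
  have vT : v \in T (u n) by apply: mem_nth.
  have cv : cellof L (iter n.+1 sigma x) = v by rewrite iterS e1 cellof_app.
  have vb : v = beta (u n.+1) by rewrite /u cv; apply/eqP; rewrite -cv; exact: HB.
  have tn : t n.+1 = shift j.+1 (t n) by rewrite /t iterS e1 shiftL_app.
  move: (vT); rewrite memT => /andP [_ /eqP pv].
  split; first by rewrite -vb.
  have ij : index (beta (u n.+1)) (T (u n)) = j by rewrite -vb index_uniq // uniqT.
  rewrite /code2 ij tn app_code; apply: functional_extensionality_dep => i.
  rewrite /shift; case: ltngtP => h.
  - by rewrite (@lead_before n' (t n) i h).
  - by rewrite subnK.
  - by rewrite h (@lead_lt n' (t n) jn).
have hp : forall n, u (n + q)%N = u n.
  apply: (@back_periodic _ (fun a => p (beta a))) => n; exact: (step n).1.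
have ht : forall i n, t n i = t (n + q)%N i.
  elim/ltn_ind => i IH n.
  rewrite (step n).2 (step (n + q)%N).2 hp -addSn hp /app.
  case: ltnP => // h; apply: IH.
  have c0 : forall a b, (0 < size (code2 a b))%N by move=> a b; rewrite /code2 size_cat /= addn1.
  by rewrite ltn_subrL c0 (leq_trans (c0 _ _) h).
rewrite xn -[q]add0n hp.
have -> : t (0 + q)%N = t 0 by apply: functional_extensionality_dep => i; symmetry; exact: ht.
by rewrite -xn.
Qed.

Theorem sigma_dyn x : exists z q n1, (0 < q)%N /\ iter q sigma z = z /\
  forall j, (fun k => iter (n1 + k * q + j)%N sigma x) @ \oo --> iter j sigma z.
Proof.
case: (pselect (exists n, ~~ isB (cellof L (iter n sigma x)))) => [[n nB]|nex].
  apply: (@dynA x n.+1 (f (cellof L (iter n sigma x)))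
     (app (code (cellof L (iter n sigma x))) (shift L (iter n sigma x)))).
  by rewrite iterS -{1}(app_cellof L (iter n sigma x)) sigma_nonB.
have HB : forall n, isB (cellof L (iter n sigma x)).
  move=> n; apply/negPn/negP => h; apply: nex; by exists n.
have hx := dynB HB.
exists x, (#|{: G}|)`!, 0%N; split; first exact: fact_gt0.
split => // j.
have -> : (fun k => iter (0 + k * (#|{: G}|)`! + j)%N sigma x) = fun=> iter j sigma x.
  by apply: funext => k; rewrite add0n addnC iterD (iter_mul_fix hx).
exact: cvg_cst.
Qed.


Hypotheses (NL : (N <= L)%N)
  (Hp : forall (c : Cell) i, (i < N)%N -> nth false (val (p c)) i = nth false (val c) i).

Lemma sigma_close x i : (i < N)%N -> sigma x i = nth false (val (f (cellof L x))) i.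
Proof.
move=> iN; have iL : (i < L)%N := leq_trans iN NL.
rewrite -{1}(app_cellof L x); set w := cellof L x.
case: (boolP (isB w)) => Bw; last first.
  by rewrite sigma_nonB // app_nth ?size_tuple // -Hp // Hpa.
rewrite (eqP Bw) sigma_B /= Hfb; set u := f w.
case: ifP => h.
  set v := nth (beta u) (T u) _.
  have : v \in T u by apply: mem_nth.
  rewrite memT => /andP [_ /eqP pv].
  by rewrite app_nth ?size_tuple // -Hp // pv.
by rewrite app_cat app_nth ?size_tuple // -Hp // Hpa.
Qed.

End Construction.


Lemma nth_mk n (F : 'I_n -> bool) i (h : (i < n)%N) :
  nth false (val [tuple F j | j < n]) i = F (Ordinal h).
Proof. by rewrite -(tnth_nth false _ (Ordinal h)) tnth_mktuple. Qed.

Lemma cont_agree (F : cantor_space -> cantor_space) N : continuous F ->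
  exists L0, forall y z, agree L0 y z -> agree N (F y) (F z).
Proof.
move=> Fc; apply: unif => x.
have := Fc x _ (nbhs_cyl (F x) N) => /nbhsP [n Hn].
exists n => y z xy xz; apply: agree_trans (Hn z xz).
exact: agree_sym (Hn y xy).
Qed.

Definition zero : cantor_space := fun _ => false.

Theorem cantor_main (T0 T0i : cantor_space -> cantor_space) :
  cancel T0 T0i -> cancel T0i T0 -> continuous T0 -> forall N,
  exists s t : cantor_space -> cantor_space,
   [/\ cancel s t, cancel t s, continuous s, continuous t &
    (forall x, agree N (s x) (T0 x)) /\
    forall x, exists z q n1, (0 < q)%N /\ iter q s z = z /\
      forall j, (fun k => iter (n1 + k * q + j)%N s x) @ \oo --> iter j s z].
Proof.
move=> T0K T0iK T0c N.
have [L0 HL0] := cont_agree N T0c.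
set L := (maxn L0 N).+1.
have NL : (N <= L)%N by rewrite /L leqW // leq_maxr.
have L0L : (L0 <= L.-1)%N by rewrite /L /= leq_maxl.
pose f (c : L.-tuple bool) : N.-tuple bool := [tuple T0 (app c zero) i | i < N].
pose p (c : L.-tuple bool) : N.-tuple bool := [tuple nth false c i | i < N].
pose alpha (u : N.-tuple bool) : L.-tuple bool := [tuple nth false u i | i < L].
pose y (u : N.-tuple bool) := T0i (app u zero).
pose beta (u : N.-tuple bool) : L.-tuple bool :=
  [tuple if (i < L.-1)%N then y u i else true | i < L].
have Lgt : (L.-1 < L)%N by rewrite /L.
have Hpa : forall u, p (alpha u) = u.
  move=> u; apply: eq_from_tnth => i; rewrite tnth_mktuple (tnth_nth false).
  by rewrite nth_mk ?(leq_trans (ltn_ord i) NL) //.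
have Hfb : forall u, f (beta u) = u.
  move=> u; apply: eq_from_tnth => i; rewrite tnth_mktuple (tnth_nth false).
  have := HL0 (app (beta u) zero) (y u).
  have -> : nth false u i = T0 (y u) i.
    by rewrite /y T0iK /app size_tuple ltn_ord.
  apply => //.
  move=> k kL0; have kL : (k < L)%N by apply: leq_trans kL0 (leq_trans L0L (leq_pred _)).
  by rewrite /app size_tuple kL nth_mk (leq_trans kL0 L0L).
have Hab : forall u w, alpha u != beta w.
  move=> u w; apply/negP => /eqP e.
  have := congr1 (fun t : L.-tuple bool => nth false t L.-1) e.
  rewrite !nth_mk ltnn /= nth_default // size_tuple.
  by rewrite /L /= leq_maxr.
have Hp : forall (c : L.-tuple bool) i, (i < N)%N -> nth false (val (p c)) i = nth false (val c) i.
  by move=> c i iN; rewrite nth_mk.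
exists (sigma f p alpha beta), (tau f p alpha beta); split.
- exact: sigmaK.
- exact: tauK.
- exact: sigma_cont.
- exact: tau_cont.
- split; last by move=> x; exact: sigma_dyn.
  move=> x i iN; rewrite (sigma_close Hpa Hfb NL Hp x iN) nth_mk.
  apply: HL0 => // k kL0; rewrite /app size_tuple.
  have kL : (k < L)%N by apply: leq_trans kL0 (leq_trans L0L (leq_pred _)).
  by rewrite kL cellof_nth.
Qed.


Lemma sep_closed (T : topologicalType) : hausdorff_space T -> compact [set: T] ->
  forall E1 E2 : set T, closed E1 -> closed E2 -> E1 `&` E2 = set0 ->
  exists U1 U2, [/\ open U1, open U2, E1 `<=` U1, E2 `<=` U2 & U1 `&` U2 = set0].
Proof.
move=> hT cT E1 E2 c1 c2 d12.
have NT := compact_normal hT cT.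
have : set_nbhs E1 (~` E2).
  move=> x E1x; apply: open_nbhs_nbhs; split; first exact: closed_openC.
  by move=> E2x; have : (E1 `&` E2) x by []; rewrite d12.
move=> /(NT E1 c1) [V V1 clV].
exists (interior V), (~` closure V); split.
- exact: open_interior.
- by apply: closed_openC; exact: closed_closure.
- by move=> x /V1.
- by move=> x E2x clx; have := clV x clx.
- apply/seteqP; split => [x [iV nclV]|//]; apply: nclV.
  by apply: subset_closure; exact: interior_subset.
Qed.

Lemma big_setI_seq (T : Type) (I : eqType) (s : seq I) (F : I -> set T) :
  \big[setI/setT]_(i <- s) F i = [set y | forall i, i \in s -> F i y].
Proof.
elim: s => [|a s IH]; first by rewrite big_nil; apply/seteqP; split.
rewrite big_cons IH; apply/seteqP; split => y.
  by move=> [Fa Hs] i; rewrite in_cons => /orP [/eqP -> //|/Hs].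
by move=> H; split; [apply: H; rewrite mem_head | move=> i iS; apply: H; rewrite in_cons iS orbT].
Qed.

Lemma clopen_big (T : topologicalType) (I : Type) (s : seq I) (F : I -> set T) :
  (forall i, clopen (F i)) -> clopen (\big[setI/setT]_(i <- s) F i).
Proof.
move=> H; elim: s => [|a s IH]; first by rewrite big_nil; exact: clopenT.
by rewrite big_cons; apply: clopenI.
Qed.

Lemma td_zero_dim (T : ptopologicalType) : hausdorff_space T -> compact [set: T] ->
  totally_disconnected [set: T] -> zero_dimensional T.
Proof.
move=> hT cT tdT x y xy.
pose Q := [set z | forall C : set T, clopen C -> C x -> C z].
have Qx : Q x by [].
have Qcl : closed Q.
  have -> : Q = \bigcap_(C in [set C : set T | clopen C /\ C x]) C.
    by apply/seteqP; split => [z Qz C [cC Cx]|z H C cC Cx]; [exact: Qz|exact: H].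
  by apply: closed_bigI => C [[]].
have KEY : forall E1 E2 : set T, closed E1 -> closed E2 -> E1 `&` E2 = set0 ->
    Q `<=` E1 `|` E2 -> E1 x -> Q `<=` E1.
  move=> E1 E2 c1 c2 d12 QE E1x.
  have [U1 [U2 [oU1 oU2 EU1 EU2 dU]]] := sep_closed hT cT c1 c2 d12.
  have hz : forall z, exists C : set T, [/\ clopen C, C x & ~ (U1 `|` U2) z -> ~ C z].
    move=> z; case: (pselect ((U1 `|` U2) z)) => Uz.
      by exists setT; split => //; exact: clopenT.
    have nQz : ~ Q z by move=> /QE [/EU1|/EU2] h; apply: Uz; [left|right].
    have /existsNP [C /not_implyP [cC /not_implyP [Cx nCz]]] := nQz.
    by exists C; split.
  pose Cf z := projT1 (cid (hz z)).
  have CfP z : [/\ clopen (Cf z), Cf z x & ~ (U1 `|` U2) z -> ~ Cf z z] :=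
    projT2 (cid (hz z)).
  have := cT; rewrite compact_cover => /(_ T setT (fun z => ~` Cf z `|` (U1 `|` U2))).
  case.
  - move=> z _; apply: openU; last exact: openU.
    by have [[_ ?] _ _] := CfP z; exact: closed_openC.
  - move=> z _; exists z => //; case: (pselect ((U1 `|` U2) z)) => Uz; first by right.
    by left; have [_ _ /(_ Uz)] := CfP z.
  move=> D' _ cov.
  pose C := \big[setI/setT]_(z <- finmap.enum_fset D') Cf z.
  have Cc : clopen C by apply: clopen_big => z; have [] := CfP z.
  have CE : C = [set w | forall z, z \in finmap.enum_fset D' -> Cf z w] by exact: big_setI_seq.
  have Cx : C x by rewrite CE => z _; have [] := CfP z.
  have CU : C `<=` U1 `|` U2.
    move=> w Cw; have [z zD [nC|//]] := cov w I.
    by exfalso; apply: nC; move: Cw; rewrite CE; apply.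
  have Wc : clopen (C `&` U1).
    split; first by apply: openI => //; case: Cc.
    have -> : C `&` U1 = C `&` ~` U2.
      apply/seteqP; split => w [Cw Uw]; split => //.
        by move=> U2w; have : (U1 `&` U2) w by []; rewrite dU.
      by have [] := CU w Cw.
    by apply: closedI; [case: Cc|exact: open_closedC].
  move=> z Qz; have [//|E2z] := QE z Qz.
  have [_ U1z] := Qz _ Wc (conj Cx (EU1 x E1x)).
  have : (U1 `&` U2) z by split => //; exact: EU2.
  by rewrite dU.
have Qconn : connected Q.
  move=> B [b Bb] [Op oOp BO] [F cF BF].
  pose E1 := Q `&` F; pose E2 := Q `&` ~` Op.
  have c1 : closed E1 by exact: closedI.
  have c2 : closed E2 by apply: closedI => //; exact: open_closedC.
  have d12 : E1 `&` E2 = set0.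
    apply/seteqP; split => // z [[Qz Fz] [_ nOz]].
    have : B z by rewrite BF; split.
    by rewrite BO => -[].
  have QE : Q `<=` E1 `|` E2.
    move=> z Qz; case: (pselect (Op z)) => Oz; last by right.
    left; have : B z by rewrite BO; split.
    by rewrite BF.
  case: (pselect (Op x)) => Ox.
    have E1x : E1 x.
      have : B x by rewrite BO; split.
      by rewrite BF.
    apply/seteqP; split; first by rewrite BO => z [].
    by move=> z /(KEY _ _ c1 c2 d12 QE E1x); rewrite BF.
  have E2x : E2 x by [].
  have : Q `<=` E2.
    apply: (KEY E2 E1 c2 c1); [by rewrite setIC | by rewrite setUC | by []].
  move=> QE2; exfalso; have : Q b by move: Bb; rewrite BO => -[].
  move=> /QE2 [_ nOb]; by move: Bb; rewrite BO => -[].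
have Qsub : Q `<=` [set x].
  rewrite -(tdT x I) => z Qz; exists Q => //.
apply: contrapT => /forallNP H.
have : Q y.
  move=> C cC Cx; apply: contrapT => nCy; apply: (H C); split => //.
by move=> /Qsub /= yx; move: xy; rewrite yx eqxx.
Qed.


Lemma nbhs_big (X : topologicalType) (y : X) (s : seq nat) (U : nat -> set X) :
  (forall j, nbhs y (U j)) -> nbhs y (\big[setI/setT]_(j <- s) U j).
Proof.
move=> H; elim: s => [|a s IH]; first by rewrite big_nil; exact: filterT.
by rewrite big_cons; apply: filterI.
Qed.

Lemma omega_eq (X : topologicalType) (F : X -> X) x w q n1 :
  hausdorff_space X -> (0 < q)%N -> iter q F w = w ->
  (forall j, (fun k => iter (n1 + k * q + j)%N F x) @ \oo --> iter j F w) ->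
  omega_limit F x = range (fun n => iter n F w).
Proof.
move=> hX q0 hw hc; apply/seteqP; split; last first.
  move=> _ [m _ <-] U HU N.
  have [k0 _ Hk] := hc m U HU.
  exists (n1 + (maxn k0 N) * q + m)%N; split; last by apply: Hk; rewrite /= leq_maxl.
  have h1 : (maxn k0 N <= maxn k0 N * q)%N by rewrite leq_pmulr.
  have h2 : (N <= maxn k0 N)%N by exact: leq_maxr.
  lia.
move=> y; rewrite /omega_limit /= => Hy; apply: contrapT => ny.
have sep : forall j, exists UV : set X * set X,
    [/\ nbhs y UV.1, nbhs (iter j F w) UV.2 & UV.1 `&` UV.2 = set0].
  move=> j; have : y != iter j F w by apply/eqP => e; apply: ny; exists j.
  rewrite open_hausdorff in hX; move=> /hX [[A B] /= [yA wB] [oA oB /eqP AB]].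
  exists (A, B); split => //=; apply: open_nbhs_nbhs; split => //; exact: set_mem.
pose U j := (projT1 (cid (sep j))).1.
pose V j := (projT1 (cid (sep j))).2.
have UVP j : [/\ nbhs y (U j), nbhs (iter j F w) (V j) & U j `&` V j = set0] :=
  projT2 (cid (sep j)).
have kj : forall j, exists k0, forall k, (k0 <= k)%N -> V j (iter (n1 + k * q + j) F x).
  move=> j; have [Hu Hv _] := UVP j; have [k0 _ Hk] := hc j _ Hv.
  by exists k0 => k kk; apply: Hk.
pose k j := projT1 (cid (kj j)).
have kP j := projT2 (cid (kj j)).
pose K0 := \max_(j < q) k j.
have HU : nbhs y (\big[setI/setT]_(j <- iota 0 q) U j).
  by apply: nbhs_big => j; have [] := UVP j.
have [n [Nn Un]] := Hy _ HU (n1 + K0 * q)%N.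
move: Un; rewrite big_setI_seq => Un.
set m := (n - n1)%N.
have nm : n = (n1 + (m %/ q) * q + m %% q)%N.
  by rewrite -addnA -divn_eq /m subnKC // (leq_trans (leq_addr _ _) Nn).
have jq : (m %% q < q)%N by rewrite ltn_mod.
have kk : (k (m %% q) <= m %/ q)%N.
  apply: leq_trans (@leq_bigmax _ (fun j : 'I_q => k j) (Ordinal jq)) _; rewrite -/K0 leq_divRL //.
  by rewrite /m leq_subRL ?(leq_trans (leq_addr _ _) Nn) // addnC.
have Vn := kP (m %% q) _ kk; rewrite -nm in Vn.
have Uj := Un (m %% q); rewrite mem_iota add0n /= jq in Uj.
have [_ _ e] := UVP (m %% q).
have : (U (m %% q) `&` V (m %% q)) (iter n F x) by split => //; exact: Uj.
by rewrite e.
Qed.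


Lemma dist_cont (R : realType) (K : metricType R) (a b : K -> K) :
  continuous a -> continuous b -> continuous (fun x : K => (mdist (a x) (b x) : R)).
Proof.
move=> ca cb x; apply/cvgrPdist_lt => e e0.
have e2 : (0 < e / 2)%R by rewrite divr_gt0.
have Ha := ca x _ (nbhsx_ballx (a x) _ e2).
have Hb := cb x _ (nbhsx_ballx (b x) _ e2).
near=> t.
have Hat : ball (a x) (e / 2) (a t) by near: t; exact: Ha.
have Hbt : ball (b x) (e / 2) (b t) by near: t; exact: Hb.
move: Hat Hbt; rewrite !ballEmdist /= => Ha1 Hb1.
have t1 := metric_triangle (a x) (a t) (b x).
have t2 := metric_triangle (a t) (b t) (b x).
have t3 := metric_triangle (a t) (a x) (b t).
have t4 := metric_triangle (a x) (b x) (b t).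
rewrite (metric_sym (a t) (a x)) in t3.
rewrite (metric_sym (b t) (b x)) in t2.
rewrite ltr_distlC; apply/andP; split; lra.
Unshelve. all: by end_near.
Qed.

Lemma transfer (R : realType) (K : metricType R) (h : cantor_space -> K)
  (g : K -> cantor_space) :
  cancel h g -> cancel g h -> continuous h -> continuous g -> compact [set: K] ->
  forall (T : K -> K), homeomorphism T -> forall eps : R, (0 < eps)%R ->
  exists T' : K -> K,
    [/\ homeomorphism T',
        (exists x0 : K, forall x : K, (mdist (T x) (T' x) <= mdist (T x0) (T' x0))%R),
        (forall x : K, (mdist (T x) (T' x) < eps)%R) &
        (forall x : K, periodic_orbit T' (omega_limit T' x))].
Proof.
move=> hK gK hc gc cK T [Ti [TK TiK Tc Tic]] eps e0.
pose T0 a := g (T (h a)); pose T0i a := g (Ti (h a)).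
have T0K : cancel T0 T0i by move=> a; rewrite /T0 /T0i gK TK hK.
have T0iK : cancel T0i T0 by move=> a; rewrite /T0 /T0i gK TiK hK.
have T0c : continuous T0.
  by move=> a; exact: continuous_comp (hc a) (continuous_comp (Tc _) (gc _)).
have e2 : (0 < eps / 2)%R by rewrite divr_gt0.
have [N HN] : exists N, forall y z, agree N y z -> (mdist (h y) (h z) < eps)%R.
  apply: unif => x.
  have := hc x _ (nbhsx_ballx (h x) _ e2) => /nbhsP [n Hn].
  exists n => y z xy xz.
  have := Hn y xy; have := Hn z xz; rewrite /= !ballEmdist /= => H1 H2.
  have t1 := metric_triangle (h y) (h x) (h z).
  rewrite (metric_sym (h y) (h x)) in t1; lra.
have [s [t [sK tK sc tc [close dyn]]]] := cantor_main T0K T0iK T0c N.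
pose T' x := h (s (g x)).
have T'c : continuous T'.
  by move=> a; exact: continuous_comp (gc a) (continuous_comp (sc _) (hc _)).
have iterT' : forall n x', iter n T' x' = h (iter n s (g x')).
  by elim=> [x'|n IH x'] /=; [rewrite gK | rewrite IH /T' hK].
exists T'; split.
- exists (fun x => h (t (g x))); split.
  + by move=> x; rewrite /T' hK sK gK.
  + by move=> x; rewrite /T' hK tK gK.
  + exact: T'c.
  + by move=> a; exact: continuous_comp (gc a) (continuous_comp (tc _) (hc _)).
- have := @compact_EVT_max K R (fun x => mdist (T x) (T' x)) setT.
  case.
  + by exists (h point).
  + exact: cK.
  + have H := dist_cont Tc T'c; have H2 := @continuous_subspaceT _ _ setT _ H; exact H2.
  by move=> c _ Hc; exists c => x; apply: Hc; rewrite inE.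
- move=> x; have -> : T x = h (T0 (g x)) by rewrite /T0 !gK.
  by apply: HN; apply: agree_sym; exact: close.
- move=> x; have [z [q [n1 [q0 [hz hcv]]]]] := dyn (g x).
  exists (h z), q; split => //; first by rewrite iterT' hK hz.
  apply: (@omega_eq _ T' x (h z) q n1) => //.
  + exact: metric_hausdorff.
  + by rewrite iterT' hK hz.
  move=> j.
  have -> : (fun k => iter (n1 + k * q + j) T' x) =
      h \o (fun k => iter (n1 + k * q + j) s (g x)).
    by apply: funext => k; rewrite iterT'.
  rewrite iterT' hK; apply: continuous_cvg => //; exact: hc.
Qed.


Definition Kp (R : realType) (K : metricType R) (x0 : K) : Type := K.
HB.instance Definition _ (R : realType) (K : metricType R) (x0 : K) :=
  PseudoMetric.on (Kp x0).
HB.instance Definition _ (R : realType) (K : metricType R) (x0 : K) :=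
  isPointed.Build (Kp x0) x0.

Local Open Scope ring_scope.

Theorem theorem1p2 (R : realType) (K : metricType R) (hK : cantor_set K)
    (T : K -> K) (hT : homeomorphism T) (eps : R) (heps : 0 < eps) :
  exists T' : K -> K,
    [/\ homeomorphism T',
        (exists x0 : K, forall x : K, mdist (T x) (T' x) <= mdist (T x0) (T' x0)),
        (forall x : K, mdist (T x) (T' x) < eps) &
        (forall x : K, periodic_orbit T' (omega_limit T' x))].
Proof.
case: hK => -[x0 _] td perf cpt.
have hausK : hausdorff_space K := metric_hausdorff (T := K).
have cl : cantor_like (Kp x0).
  split => //; exact: (@td_zero_dim (Kp x0)).
have [f [fc fcl]] := @homeomorphism_cantor_like R (Kp x0) cl.
pose h : cantor_space -> K := f.
pose g : K -> cantor_space := f^-1.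
have hK : cancel h g by move=> a; exact: funK (in_setT a).
have gK : cancel g h by move=> a; exact: invK (in_setT a).
have gc : continuous g.
  apply/continuous_closedP => A clA.
  have -> : g @^-1` A = f @` A.
    apply/seteqP; split => y.
      by move=> Ay; exists (g y) => //; exact: gK.
    by move=> [a Aa <-]; rewrite /= -/h hK.
  exact: fcl.
exact: (@transfer R K h g hK gK fc gc cpt T hT eps heps).
Qed.
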